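(* Let $\mu$ be a locally finite Borel measure on $\mathbb{R}$. Then $\mu$ is absolutely decaying if and only if it is both Federer and efd.
   Context: $B(x,\rho)$ denotes the closed ball of radius $\rho$ about $x$. $\mu$ is $(C,\gamma)$-absolutely decaying ($C,\gamma>0$) if there is $\rho_0>0$ such that for all $0<\rho\le\rho_0$, $x\in\operatorname{supp}\mu$, $y\in\mathbb{R}$, $\varepsilon>0$: $\mu(B(x,\rho)\cap B(y,\varepsilon\rho))<C\varepsilon^\gamma\mu(B(x,\rho))$; $\mu$ is absolutely decaying if it is $(C,\gamma)$-absolutely decaying for some $C,\gamma>0$. $\mu$ is Federer (resp. efd) if there exist $\rho_0>0$ and $0<\varepsilon,\delta<1$ such that for every $0<\rho\le\rho_0$ and every $x\in\operatorname{supp}\mu$, the ratio $\mu(B(x,\varepsilon\rho))/\mu(B(x,\rho))$ is at least (resp. at most) $\delta$. *)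

(* Defs.v *)
From HB Require Import structures.
From mathcomp Require Import all_boot all_order all_algebra.
From mathcomp Require Import all_classical all_reals all_analysis.
Set Implicit Arguments. Unset Strict Implicit. Unset Printing Implicit Defensive.
Import Order.TTheory GRing.Theory Num.Theory.
Import numFieldNormedType.Exports.
Local Open Scope classical_set_scope.
Local Open Scope ring_scope.

(* Borel measures on the real line R (R : realType carries its Borel
   sigma-algebra as canonical measurable structure). *)

Definition cball (R : realType) (x r : R) : set R := [set z | `|x - z| <= r].

Definition supp (R : realType) (mu : {measure set R -> \bar R}) : set R :=
  [set x | forall U : set R, open U -> U x -> (0 < mu U)%E].

Definition locally_finite (R : realType) (mu : {measure set R -> \bar R}) :=
  forall x : R, exists2 U : set R, nbhs x U & (mu U < +oo)%E.

Definition abs_decaying_with (R : realType) (mu : {measure set R -> \bar R})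
  (C gam : R) :=
  exists2 rho0 : R, 0 < rho0 &
    forall rho x y eps : R, 0 < rho -> rho <= rho0 -> supp mu x -> 0 < eps ->
      (mu (cball x rho `&` cball y (eps * rho))
        < (C * powR eps gam)%:E * mu (cball x rho))%E.

Definition abs_decaying (R : realType) (mu : {measure set R -> \bar R}) :=
  exists C gam : R, [/\ 0 < C, 0 < gam & abs_decaying_with mu C gam].

Definition federer (R : realType) (mu : {measure set R -> \bar R}) :=
  exists rho0 eps delta : R,
    [/\ 0 < rho0, 0 < eps < 1, 0 < delta < 1 &
      forall rho x : R, 0 < rho -> rho <= rho0 -> supp mu x ->
        delta <= fine (mu (cball x (eps * rho))) / fine (mu (cball x rho))].

Definition efd (R : realType) (mu : {measure set R -> \bar R}) :=
  exists rho0 eps delta : R,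
    [/\ 0 < rho0, 0 < eps < 1, 0 < delta < 1 &
      forall rho x : R, 0 < rho -> rho <= rho0 -> supp mu x ->
        fine (mu (cball x (eps * rho))) / fine (mu (cball x rho)) <= delta].

(* Main.v *)
Require Import Defs.
From HB Require Import structures.
From mathcomp Require Import all_boot all_order all_algebra.
From mathcomp Require Import all_classical all_reals all_analysis.
From mathcomp Require Import ring lra measurable_realfun.
Set Implicit Arguments. Unset Strict Implicit. Unset Printing Implicit Defensive.
Import Order.TTheory GRing.Theory Num.Theory.
Import numFieldNormedType.Exports.
Local Open Scope classical_set_scope.
Local Open Scope ring_scope.

Lemma exists_pow_lt (R : realType) (a b : R) : 0 <= a < 1 -> 0 < b -> exists n : nat, a ^+ n < b.
Proof.
move=> /andP[a0 a1] b0.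
have := @cvg_expr R a; rewrite ger0_norm// => /(_ a1).
move=> /cvgr0Pnorm_lt /(_ b b0) [N _ HN].
exists N; have := HN N (leqnn N) => /=.
by rewrite ger0_norm// exprn_ge0.
Qed.

Lemma cballE (R : realType) (x r : R) : cball x r = `[x - r, x + r]%classic.
Proof.
apply/seteqP; split => z /=; rewrite /cball in_itv /= ler_distl; lra.
Qed.

Lemma measurable_cball (R : realType) (x r : R) : measurable (cball x r).
Proof. by rewrite cballE; exact: measurable_itv. Qed.

Section S.
Variable R : realType.
Variable mu : {measure set R -> \bar R}.

Lemma supp_pos (x r : R) : supp mu x -> 0 < r -> (0 < mu (cball x r))%E.
Proof.
move=> sx r0.
have ob : open (ball x r) by exact: ball_open.
have := sx _ ob (ballxx x r0) => h; apply: (lt_le_trans h).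
apply: le_measure; rewrite ?inE; [exact: open_measurable|exact: measurable_cball|].
by move=> z; rewrite -ball_normE /ball_ /cball /= => /ltW.
Qed.

Lemma compact_nosupp (A : set R) : compact A -> measurable A ->
  (forall z, A z -> ~ supp mu z) -> mu A = 0%E.
Proof.
move=> cA mA ns.
have hU : forall z, exists U : set R, A z -> [/\ open U, U z & mu U = 0%E].
  move=> z; case: (pselect (A z)) => Az; last by exists set0.
  have := ns z Az; rewrite /supp /= => /existsNP [U /not_implyP [oU /not_implyP [Uz]]].
  move=> /negP; rewrite -leNgt => U0; exists U => _; split => //.
  by apply/eqP; rewrite eq_le U0 measure_ge0.
pose f z := xget set0 [set U : set R | A z -> [/\ open U, U z & mu U = 0%E]].
have fP z : A z -> [/\ open (f z), f z z & mu (f z) = 0%E].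
  move=> Az; rewrite /f; case: xgetP => [U -> HU|]; first exact: HU.
  by case: (hU z) => U HU /(_ U).
move: cA; rewrite compact_cover => /(_ R A f).
case.
- by move=> i /fP [].
- by move=> z Az; exists z => //; case: (fP z Az).
move=> D DA Acov.
apply/(negligibleP _ mA); apply: (negligibleS Acov).
have HD : forall i, i \in (finmap.enum_fset D) -> A i.
  by move=> i Hi; have := DA i; rewrite inE; apply...
apply: (@negligibleS _ _ _ _ (\bigcup_(i in [set i | i \in (finmap.enum_fset D)]) f i)).
  by move=> z [i Di fi]; exists i.
move: HD.
elim: (finmap.enum_fset D) => [|a s IH] H.
  by rewrite (_ : [set i | i \in [::]] = set0) ?bigcup_set0; [exact: negligible_set0|apply/seteqP; split].
have -> : \bigcup_(i in [set i | i \in a :: s]) f i = f a `|` \bigcup_(i in [set i | i \in s]) f i.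
  apply/seteqP; split => z /=.
    move=> [i /= Hi fi]; move: Hi; rewrite in_cons => /orP [/eqP Ei|iS]; [by left; rewrite -Ei|by right; exists i].
  by case=> [fa|[i iS fi]]; [exists a => //=; rewrite in_cons eqxx|exists i => //=; rewrite in_cons iS orbT].
apply: negligibleU; last by apply: IH => i iS; apply: H; rewrite in_cons iS orbT.
have [oa fa f0] := fP a (H a (mem_head _ _)).
by apply/negligibleP => //; exact: open_measurable.
Qed.

Lemma fin_sub (A B : set R) : measurable A -> measurable B -> A `<=` B ->
  (mu B < +oo)%E -> mu A = (fine (mu A))%:E /\ fine (mu A) <= fine (mu B).
Proof.
move=> mA mB AB Bf.
have AleB : (mu A <= mu B)%E by apply: le_measure; rewrite ?inE.
have Af : mu A \is a fin_num by rewrite ge0_fin_numE ?(le_lt_trans AleB).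
have Bfn : mu B \is a fin_num by rewrite ge0_fin_numE.
by split; [rewrite fineK|exact: fine_le].
Qed.

Lemma ad_fed_efd : abs_decaying mu -> federer mu /\ efd mu.
Proof.
move=> [C [g [C0 g0 [r0 r00 H]]]].
have finB : forall x rho, 0 < rho -> rho <= r0 -> supp mu x -> (mu (cball x rho) < +oo)%E.
  move=> x rho rho0 rhor sx; have := H rho x x 1 rho0 rhor sx ltr01.
  rewrite mul1r setIid powR1 mulr1.
  case E : (mu (cball x rho)) => [r| |] h; first exact: ltry.
    by move: h; rewrite gt0_muley ?lte_fin// ltxx.
  by [].
pose eta := Num.min (1/2) ((4*C)^-1 `^ g^-1).
have eta0 : 0 < eta by rewrite lt_min; apply/andP; split => //; apply: powR_gt0; rewrite invr_gt0 mulr_gt0.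
have eta1 : eta < 1 by rewrite gt_min; apply/orP; left; lra.
have Ceta : C * eta `^ g <= 1/4.
  have : eta `^ g <= (4*C)^-1.
    have -> : (4*C)^-1 = ((4*C)^-1 `^ g^-1) `^ g.
      by rewrite -powRrM mulVf ?gt_eqF// powRr1// ltW// invr_gt0 mulr_gt0.
    apply: ge0_ler_powR; first exact: ltW.
    - by rewrite nnegrE ltW.
    - by rewrite nnegrE powR_ge0.
    - by rewrite /eta ge_min lexx orbT.
  move=> h; rewrite (le_trans (ler_wpM2l (ltW C0) h))//.
  by rewrite invfM mulrCA mulfV ?gt_eqF// mulr1; lra.
have key : forall x rho y, 0 < rho -> rho <= r0 -> supp mu x ->
    fine (mu (cball x rho `&` cball y (eta * rho))) <= 1/4 * fine (mu (cball x rho)).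
  move=> x rho y rho0 rhor sx.
  have := H rho x y eta rho0 rhor sx eta0.
  have [E1 _] := @fin_sub (cball x rho `&` cball y (eta * rho)) (cball x rho)
    (measurableI _ _ (measurable_cball _ _) (measurable_cball _ _)) (measurable_cball _ _)
    (@subIsetl _ _ _) (finB _ _ rho0 rhor sx).
  have Bf : mu (cball x rho) \is a fin_num by rewrite ge0_fin_numE ?finB.
  rewrite E1 -(fineK Bf) -EFinM lte_fin => /ltW h; apply: (le_trans h).
  apply: ler_wpM2r; last exact: Ceta.
  by rewrite fine_ge0.
have posB : forall x rho, 0 < rho -> rho <= r0 -> supp mu x -> 0 < fine (mu (cball x rho)).
  move=> x rho rho0 rhor sx; have := supp_pos sx rho0; have := finB _ _ rho0 rhor sx.
  by case: (mu (cball x rho)) => // r _; rewrite lte_fin.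
split.
  exists r0, (1 - eta), (1/2); split => //; first (apply/andP; split; lra); first lra.
  move=> rho x rho0 rhor sx.
  have hB := posB _ _ rho0 rhor sx.
  rewrite ler_pdivlMr//.
  pose A1 := cball x ((1 - eta) * rho).
  pose Ip := cball x rho `&` cball (x + rho) (eta * rho).
  pose Im := cball x rho `&` cball (x - rho) (eta * rho).
  have mI : forall y r, measurable (cball x rho `&` cball y r).
    by move=> y r; apply: measurableI; exact: measurable_cball.
  have sub : cball x rho `<=` A1 `|` (Ip `|` Im).
    move=> z; rewrite /A1 /Ip /Im /cball /= !ler_distl => /andP [h1 h2].
    have [hz|hz] := lerP (x - (1 - eta) * rho) z; last first.
      by right; right; split; apply/andP; split; lra.
    have [hz'|hz'] := lerP z (x + (1 - eta) * rho); last first.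
      by right; left; split; apply/andP; split; lra.
    by left; apply/andP; split; lra.
  have Bf := finB _ _ rho0 rhor sx.
  have le1 : (mu (cball x rho) <= mu A1 + (mu Ip + mu Im))%E.
    apply: (le_trans (le_measure _ _ _ sub)); rewrite ?inE.
    - exact: measurable_cball.
    - by apply: measurableU; [exact: measurable_cball|apply: measurableU; exact: mI].
    apply: (le_trans (measureU2 _ _ _)); [exact: measurable_cball|by apply: measurableU; exact: mI|].
    by rewrite leeD2l// measureU2 //; exact: mI.
  have A1sub : A1 `<=` cball x rho.
    by move=> z; rewrite /A1 /cball /=; move/le_trans; apply; rewrite ler_piMl//; lra.
  have [EA _] := fin_sub (measurable_cball _ _) (measurable_cball _ _) A1sub Bf.
  have [EP _] := @fin_sub Ip _ (mI _ _) (measurable_cball _ _) (@subIsetl _ _ _) Bf.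
  have [EM _] := @fin_sub Im _ (mI _ _) (measurable_cball _ _) (@subIsetl _ _ _) Bf.
  have Bfn : mu (cball x rho) \is a fin_num by rewrite ge0_fin_numE.
  move: le1; rewrite EA EP EM -(fineK Bfn) -!EFinD lee_fin => le1.
  have k1 := key x rho (x + rho) rho0 rhor sx.
  have k2 := key x rho (x - rho) rho0 rhor sx.
  rewrite /Ip /Im in le1; lra.
exists r0, eta, (1/2); split => //; first (apply/andP; split; lra); first lra.
move=> rho x rho0 rhor sx.
have hB := posB _ _ rho0 rhor sx.
rewrite ler_pdivrMr//.
have -> : cball x (eta * rho) = cball x rho `&` cball x (eta * rho).
  apply/seteqP; split => z; last by case.
  move=> h; split => //; move: h; rewrite /cball /=; move/le_trans; apply.
  by rewrite ler_piMl//; lra.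
have := key x rho x rho0 rhor sx; lra.
Qed.

Lemma compact_cball (x r : R) : compact (cball x r).
Proof. rewrite cballE; exact: segment_compact. Qed.

Lemma closed_cball (x r : R) : closed (cball x r).
Proof. rewrite cballE; exact: interval_closed. Qed.

Lemma cball_sub (x z r s : R) : `|x - z| + r <= s -> cball z r `<=` cball x s.
Proof.
move=> h w; rewrite /cball /= => hw; apply: le_trans h.
by rewrite (le_trans (ler_distD z _ _))// lerD2l.
Qed.

Lemma dEpow (eE dE : R) (k : nat) (eps : R) : 0 < eE < 1 -> 0 < dE < 1 ->
  0 < eps -> eE ^+ k.+1 < eps ->
  dE ^+ k <= eps `^ (ln dE / ln eE) / dE.
Proof.
move=> /andP[eE0 eE1] /andP[dE0 dE1] eps0 hk.
set g := ln dE / ln eE.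
have lnE : ln eE < 0 by apply: ln_lt0; rewrite eE0.
have edE : eE `^ g = dE.
  rewrite /powR gt_eqF// /g divfK ?lt_eqF//; exact: lnK.
have g0 : 0 < g.
  rewrite /g -mulrNN -invrN divr_gt0 // oppr_gt0 // ln_lt0 //; exact/andP.
have : dE ^+ k.+1 <= eps `^ g.
  rewrite -edE -powR_mulrn ?powR_ge0// powRAC powR_mulrn; last exact: ltW.
  apply: ltW; apply: gt0_ltr_powR => //; rewrite nnegrE ?exprn_ge0 ?ltW//.
by rewrite exprS ler_pdivlMr// mulrC.
Qed.

Lemma fed_efd_ad : federer mu -> efd mu -> abs_decaying mu.
Proof.
move=> [rF [eF [dF [rF0 /andP[eF0 eF1] /andP[dF0 dF1] HF]]]].
move=> [rE [eE [dE [rE0 /andP[eE0 eE1] /andP[dE0 dE1] HE]]]].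
pose f z r := fine (mu (cball z r)).
have finF : forall z r, 0 < r -> r <= rF -> supp mu z ->
    (mu (cball z r) < +oo)%E /\ 0 < f z r.
  move=> z r r0 rr sz; have hp := supp_pos sz r0.
  have hF := HF r z r0 rr sz; rewrite /f.
  case E : (mu (cball z r)) hp hF => [a| |] hp hF.
  - by split; [exact: ltry|rewrite /= -lte_fin].
  - by move: hF; rewrite /= invr0 mulr0; lra.
  - by move: hp; rewrite ltNge leNye.
have monoF : forall z r r', 0 < r -> r <= r' -> r' <= rF -> supp mu z -> f z r <= f z r'.
  move=> z r r' r0 rr' r'F sz.
  have [_ h] := fin_sub (measurable_cball z r) (measurable_cball z r')
    (@cball_sub z z r r' ltac:(by rewrite subrr normr0 add0r)) (proj1 (finF z r' (lt_le_trans r0 rr') r'F sz)).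
  exact: h.
have eFk : forall m, 0 < eF ^+ m <= 1.
  by move=> m; rewrite exprn_gt0// exprn_ile1// ltW.
have eEk : forall m, 0 < eE ^+ m <= 1.
  by move=> m; rewrite exprn_gt0// exprn_ile1// ltW.
have iterF : forall m z r, 0 < r -> r <= rF -> supp mu z -> dF ^+ m * f z r <= f z (eF ^+ m * r).
  elim=> [|m IH] z r r0 rF' sz; first by rewrite !expr0 !mul1r.
  have /andP [h0 h1] := eFk m.
  have s0 : 0 < eF ^+ m * r by rewrite mulr_gt0.
  have s1 : eF ^+ m * r <= rF by rewrite (le_trans _ rF') // ler_piMl // ltW.
  have := HF _ z s0 s1 sz; rewrite ler_pdivlMr; last exact: (proj2 (finF _ _ s0 s1 sz)).
  move=> h; rewrite !exprS -!mulrA.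
  apply: le_trans h; apply: ler_wpM2l; [exact: ltW|exact: IH].
have iterE : forall k z r, 0 < r -> r <= rE -> r <= rF -> supp mu z -> f z (eE ^+ k * r) <= dE ^+ k * f z r.
  elim=> [|k IH] z r r0 rE' rF' sz; first by rewrite !expr0 !mul1r.
  have /andP [h0 h1] := eEk k.
  have s0 : 0 < eE ^+ k * r by rewrite mulr_gt0.
  have s1 : eE ^+ k * r <= rE by rewrite (le_trans _ rE') // ler_piMl // ltW.
  have s2 : eE ^+ k * r <= rF by rewrite (le_trans _ rF') // ler_piMl // ltW.
  have := HE _ z s0 s1 sz; rewrite ler_pdivrMr; last exact: (proj2 (finF _ _ s0 s2 sz)).
  rewrite exprS -mulrA => h; rewrite exprS -mulrA.
  apply: (le_trans h); apply: ler_wpM2l; [exact: ltW|exact: IH].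
have [m hm] : exists m : nat, eF ^+ m < 1/3 by apply: exists_pow_lt; rewrite ?ltW ?eF0//; lra.
pose r0 := Num.min rF rE / 3.
pose gam := ln dE / ln eE.
pose K := (dF ^+ m)^-1.
pose C := 2 * K / dE.
have dFm : 0 < dF ^+ m <= 1 by rewrite exprn_gt0// exprn_ile1// ltW.
have K1 : 1 <= K by rewrite /K invf_ge1 ?(proj1 (andP dFm)) ?(proj2 (andP dFm)).
have C2 : 2 <= C by rewrite /C ler_pdivlMr//; nra.
have gam0 : 0 < gam.
  rewrite /gam -mulrNN -invrN divr_gt0 // oppr_gt0 // ln_lt0 //; exact/andP.
have r00 : 0 < r0 by rewrite /r0 divr_gt0// lt_min rF0 rE0.
have r0F : r0 * 3 <= rF by rewrite /r0 divfK ?ge_min ?lexx// pnatr_eq0.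
have r0E : r0 * 3 <= rE by rewrite /r0 divfK ?ge_min ?lexx ?orbT// pnatr_eq0.
exists C, gam; split => //; first lra.
exists r0 => // rho x y eps rho0 rhor sx eps0.
have h3F : 3 * rho <= rF by lra.
have h2E : 2 * rho <= rE by lra.
have [Bf Bp] := finF x rho rho0 ltac:(lra) sx.
set S := cball x rho `&` cball y (eps * rho).
have mS : measurable S by apply: measurableI; exact: measurable_cball.
have [ES _] := @fin_sub S _ mS (measurable_cball _ _) (@subIsetl _ _ _) Bf.
have Bfn : mu (cball x rho) \is a fin_num by rewrite ge0_fin_numE.
rewrite ES -(fineK Bfn) -EFinM lte_fin.
have qpos : 0 < eps `^ gam by apply: powR_gt0.
suff : fine (mu S) < C * eps `^ gam * f x rho by [].
have [eps1|eps1] := lerP 1 eps.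
  have q1 : 1 <= eps `^ gam by rewrite -(powRr0 eps); apply: ler_powR => //; exact: ltW.
  have [_ hS] := @fin_sub S _ mS (measurable_cball _ _) (@subIsetl _ _ _) Bf.
  apply: (le_lt_trans hS); rewrite -/(f x rho).
  rewrite -[X in X < _]mul1r ltr_pM2r//; nra.
case: (pselect (exists z, S z /\ supp mu z)) => [[z [Sz sz]]|nosupp]; last first.
  rewrite (@compact_nosupp S) /=; first by rewrite !mulr_gt0 ?invr_gt0 //; lra.
  - by apply: compact_closedI; [exact: compact_cball|exact: closed_cball].
  - exact: mS.
  by move=> z Sz szz; apply: nosupp; exists z.
have ex : exists n, (fun n => eE ^+ n < eps) n by apply: exists_pow_lt; rewrite ?ltW ?eE1.
case: (ex_minnP ex) => n hn hmin.
case: n hn hmin => [|k] hn hmin; first by move: hn; rewrite expr0; lra.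
have hk : eps <= eE ^+ k.
  by rewrite leNgt; apply/negP => /hmin; rewrite ltnn.
have [hxz hyz] : `|x - z| <= rho /\ `|y - z| <= eps * rho by case: Sz.
pose t := 2 * rho.
have /andP [ek0 ek1] := eEk k.
have s0 : 0 < eps * t by rewrite mulr_gt0 // /t; lra.
have st : eps * t <= t by rewrite ler_piMl /t; lra.
have tF : t <= rF by rewrite /t; lra.
have tE : t <= rE by rewrite /t; lra.
have [_ a1] := @fin_sub S (cball z (eps * t)) mS (measurable_cball _ _)
  (subset_trans (@subIsetr _ _ _) (@cball_sub z y (eps * rho) (eps * t) ltac:(rewrite distrC /t; lra)))
  (proj1 (finF z _ s0 (le_trans st tF) sz)).
have a2 : f z (eps * t) <= f z (eE ^+ k * t).
  apply: monoF => //; first by rewrite ler_wpM2r // /t; lra.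
  by rewrite (le_trans _ tF) // ler_piMl /t //; lra.
have a3 := iterE k z t ltac:(rewrite /t; lra) tE tF sz.
have x3 : 0 < 3 * rho by lra.
have [_ a4] := @fin_sub (cball z t) (cball x (3 * rho)) (measurable_cball _ _) (measurable_cball _ _)
  (@cball_sub x z t (3 * rho) ltac:(rewrite /t; lra)) (proj1 (finF x _ x3 h3F sx)).
have a5 := iterF m x (3 * rho) x3 h3F sx.
have /andP [em0 em1] := eFk m.
have a6 : f x (eF ^+ m * (3 * rho)) <= f x rho.
  apply: monoF => //; rewrite ?mulr_gt0 //; last lra.
  by rewrite mulrA -[leRHS]mul1r ler_wpM2r; lra.
have a7 : dE ^+ k <= eps `^ gam / dE.
  by apply: dEpow => //; apply/andP.
have p0 : 0 <= dE ^+ k by rewrite exprn_ge0 // ltW.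
have c1 : f x (3 * rho) <= K * f x rho.
  rewrite /K ler_pdivlMl ?exprn_gt0 //; exact: le_trans a5 a6.
have b1 : fine (mu S) <= dE ^+ k * (K * f x rho).
  apply: (le_trans a1); apply: (le_trans a2); apply: (le_trans a3).
  apply: ler_wpM2l => //; exact: le_trans a4 c1.
apply: (le_lt_trans b1).
have kf0 : 0 < K * f x rho by rewrite mulr_gt0 //; lra.
apply: (le_lt_trans (ler_wpM2r (ltW kf0) a7)).
have pp : 0 < eps `^ gam / dE * (K * f x rho).
  by rewrite !mulr_gt0 ?invr_gt0 //; lra.
rewrite (_ : C * _ * _ = 2 * (eps `^ gam / dE * (K * f x rho))); first lra.
by rewrite /C; ring.
Qed.

End S.

Theorem proposition2p4 (R : realType) (mu : {measure set R -> \bar R}) :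
  locally_finite mu -> (abs_decaying mu <-> federer mu /\ efd mu).
Proof.
move=> _; split; first exact: ad_fed_efd.
by case; exact: fed_efd_ad.
Qed.
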